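(* Let $m,q\ge1$, and let $r$ be a uniformly random seed. For any distributions $\mu_1,\dots,\mu_m\in\Delta_q$, $$\mathbb P_r\big[\exists i,j\in[m]:\ \mathrm{MinCoupler}(\mu_i,r)\ne\mathrm{MinCoupler}(\mu_j,r)\big]\le\frac{\sum_{x\in[q]}\big(\max_{i\in[m]}\mu_i(x)-\min_{i\in[m]}\mu_i(x)\big)}{\sum_{x\in[q]}\max_{i\in[m]}\mu_i(x)}.$$
   Context: $\Delta_q=\{\nu\in[0,1]^q:\sum_x\nu(x)=1\}$. The random seed $r$ is an infinite sequence of i.i.d. pairs $(x_1,p_1),(x_2,p_2),\dots$ with $x_k$ uniform on $[q]$ and $p_k$ uniform on $[0,1]$, independent. $\mathrm{MinCoupler}(\nu,r)$ outputs $x_{i^*}$, where $i^*=\min\{k\ge1: p_k\le\nu(x_k)\}$. *)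

(* Defs.v *)
From HB Require Import structures.
From mathcomp Require Import all_boot all_order all_algebra.
From mathcomp Require Import all_classical all_reals all_analysis.
Set Implicit Arguments. Unset Strict Implicit. Unset Printing Implicit Defensive.
Import Order.TTheory GRing.Theory Num.Theory.
Local Open Scope classical_set_scope.
Local Open Scope ring_scope.

Definition is_distr (R : realType) (q : nat) (nu : 'I_q -> R) : Prop :=
  (forall x, 0 <= nu x) /\ \sum_(x < q) nu x = 1.

(* The random seed r = (x_k, p_k)_k is modelled on a probability space (T,P)
   by random variables X k : T -> 'I_q and U k : T -> R (k = 0,1,2,...,
   index 0 playing the role of the paper's index 1).  [uniform_seed P X U]
   says that the events below are measurable and that the pairs (X k, U k)
   are i.i.d. with X k uniform on [q], U k uniform on [0,1], X k and U k
   independent: the finite-dimensional joint law on rectangles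
   {X k = xs k, U k <= a k}, k < n, is the product one. *)
Definition uniform_seed (R : realType) d (T : measurableType d)
  (P : probability T R) (q : nat) (X : nat -> T -> 'I_q) (U : nat -> T -> R)
  : Prop :=
  (forall k (x : 'I_q), measurable [set t | X k t = x]) /\
  (forall k (a : R), measurable [set t | U k t <= a]) /\
  (forall (n : nat) (xs : nat -> 'I_q) (a : nat -> R),
     (forall k, 0 <= a k <= 1) ->
     P [set t | forall k, (k < n)%N -> X k t = xs k /\ U k t <= a k]
     = (\prod_(k < n) (q%:R^-1 * a k))%:E).

(* MinCoupler(nu, r): output x_{i*} with i* the least k with p_k <= nu(x_k);
   None if no such k exists (a null event). *)
Definition MinCoupler (R : realType) (T : Type) (q : nat)
  (X : nat -> T -> 'I_q) (U : nat -> T -> R) (nu : 'I_q -> R) (t : T)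
  : option 'I_q :=
  match pselect (exists k, (fun k : nat => U k t <= nu (X k t)) k) with
  | left h => Some (X (ex_minn h) t)
  | right _ => None
  end.

(* max_i mu_i(x) (all values are nonnegative, so 0 is a neutral start). *)
Definition mumax (R : realType) (m q : nat) (mu : 'I_m -> 'I_q -> R)
  (x : 'I_q) : R := \big[Num.max/0]_(i < m) mu i x.

(* min_i mu_i(x) (the start value mumax x is >= every mu_i(x); m >= 1). *)
Definition mumin (R : realType) (m q : nat) (mu : 'I_m -> 'I_q -> R)
  (x : 'I_q) : R := \big[Num.min/mumax mu x]_(i < m) mu i x.

(* Main.v *)
Require Import Defs.
From HB Require Import structures.
From mathcomp Require Import all_boot all_order all_algebra.
From mathcomp Require Import all_classical all_reals all_analysis.
From mathcomp Require Import ring lra.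
Import Order.TTheory GRing.Theory Num.Theory.
Local Open Scope classical_set_scope.
Local Open Scope ring_scope.

Lemma bigU_mem (T : Type) (I : eqType) (r : seq I) (F : I -> set T) (t : T) :
  (\big[setU/set0]_(x <- r) F x) t <-> exists x, F x t /\ x \in r.
Proof.
elim: r => [|y r IH]; first by rewrite big_nil; split=> // -[x []].
rewrite big_cons; split.
  case=> [H|/IH [x [H1 H2]]]; first by exists y; rewrite mem_head.
  by exists x; rewrite in_cons H2 orbT.
case=> x [H]; rewrite in_cons => /orP[/eqP<-|H2]; first by left.
by right; apply/IH; exists x.
Qed.

Lemma bigU_ord (T : Type) (q : nat) (F : 'I_q -> set T) (t : T) :
  (\big[setU/set0]_(x < q) F x) t <-> exists x, F x t.
Proof.
rewrite bigU_mem; split; first by case=> x [? _]; exists x.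
case=> x H; exists x; split=> //.
Qed.

Lemma meas_ex d (T : measurableType d) (I : finType) (Q : I -> set T) :
  (forall y, measurable (Q y)) -> measurable [set t | exists y, Q y t].
Proof.
move=> HQ.
have -> : [set t | exists y, Q y t] = \bigcup_(y in [set: I]) Q y.
  by apply/seteqP; split=> t /=; [case=> y ?; exists y | case=> y _ ?; exists y].
by apply: fin_bigcup_measurable => //; exact: finite_finset.
Qed.

Lemma meas_forall d (T : measurableType d) (n : nat) (Q : nat -> set T) :
  (forall j, measurable (Q j)) -> measurable [set t | forall j, (j < n)%N -> Q j t].
Proof.
move=> HQ; elim: n => [|n IH].
  have -> : [set t | forall j, (j < 0)%N -> Q j t] = setT.
    by apply/seteqP; split=> t //= _ j.
  exact: measurableT.
have -> : [set t | forall j, (j < n.+1)%N -> Q j t] =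
   [set t | forall j, (j < n)%N -> Q j t] `&` Q n.
  apply/seteqP; split=> t /=.
    by move=> H; split; [move=> j jn; apply: H; exact: ltnW|exact: H].
  case=> H1 H2 j; rewrite ltnS leq_eqVlt => /orP[/eqP->//|]; exact: H1.
exact: measurableI.
Qed.

Lemma meas_eq d (T : measurableType d) (A B : set T) :
  (forall t, A t <-> B t) -> measurable A -> measurable B.
Proof.
move=> H; suff -> : B = A by [].
by apply/seteqP; split=> t /H.
Qed.

Set Implicit Arguments. Unset Strict Implicit.

Definition Ev (R : realType) (T : Type) (q : nat) (X : nat -> T -> 'I_q)
  (U : nat -> T -> R) (i n : nat) (xs : nat -> 'I_q) (a b : nat -> 'I_q -> R) : set T :=
  [set t | forall j, (j < n)%N -> if (j < i)%N then is_true (a j (X j t) < U j t <= b j (X j t))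
                                 else X j t = xs j /\ U j t <= b j (xs j)].

Definition evprod (R : realType) (q : nat) (i n : nat) (xs : nat -> 'I_q)
  (a b : nat -> 'I_q -> R) : R :=
  \prod_(j < n) (q%:R^-1 * (if (j < i)%N then \sum_(x < q) (b j x - a j x) else b j (xs j))).

Lemma meas_Ev (R : realType) d (T : measurableType d) (P : probability T R) q X U
  (HU : uniform_seed P X U) i n xs a b : measurable (@Ev R T q X U i n xs a b).
Proof.
case: HU => HX [HUm _].
apply: meas_forall => j; case: (j < i)%N => /=.
  apply: (@meas_eq _ _ ([set t | exists y, X j t = y /\ a j (X j t) < U j t <= b j (X j t)]))...
    by move=> t /=; split; [case=> y []|move=> h; exists (X j t)].
  apply: meas_ex => y.
  apply: (@meas_eq _ _ ([set t | X j t = y] `&` (~` [set t | U j t <= a j y]) `&` [set t | U j t <= b j y]))...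
    move=> t /=; split.
      case=> -[-> h1] h2; split=> //; apply/andP; split=> //.
      by rewrite ltNge; apply/negP.
    by case=> -> /andP[h1 h2]; split; [split=> //; rewrite leNgt h1|].
  by apply: measurableI; [apply: measurableI; [|apply: measurableC]|].
apply: (@meas_eq _ _ ([set t | X j t = xs j] `&` [set t | U j t <= b j (xs j)])) => //.
exact: measurableI.
Qed.


Lemma Ev_prob (R : realType) d (T : measurableType d) (P : probability T R) q X U
  (HU : uniform_seed P X U) i :
  forall n xs (a b : nat -> 'I_q -> R), (forall j x, 0 <= a j x) -> (forall j x, a j x <= b j x) ->
  (forall j x, b j x <= 1) ->
  P (@Ev R T q X U i n xs a b) = (evprod i n xs a b)%:E.
Proof.
elim: i => [|i IH] n xs a b Ha Hab Hb.
  have -> : Ev X U 0 n xs a b = [set t | forall k, (k < n)%N -> X k t = xs k /\ U k t <= (fun k => b k (xs k)) k].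
    by apply/seteqP; split=> t /= H k kn; move: (H k kn); rewrite ltn0.
  rewrite HU.2.2; last by move=> k; rewrite (le_trans (Ha k (xs k)) (Hab _ _)) Hb.
  by rewrite /evprod; congr EFin; apply: eq_bigr => j _; rewrite ltn0.
have [Hin|Hni] := ltnP i n; last first.
  have -> : Ev X U i.+1 n xs a b = Ev X U i n xs a b.
    apply/seteqP; split=> t /= H j jn; move: (H j jn);
    have h1 : (j < i)%N := leq_trans jn Hni; have h2 : (j < i.+1)%N := ltnW h1;
    by rewrite h1 h2.
  rewrite IH //; congr EFin; apply: eq_bigr => j _.
  have h1 : (j < i)%N := leq_trans (ltn_ord j) Hni; have h2 : (j < i.+1)%N := ltnW h1.
  by rewrite h1 h2.
pose xsx := fun (x : 'I_q) (j : nat) => if j == i then x else xs j.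
pose b' := fun j => if j == i then a j else b j.
have Hab' : forall j x, a j x <= b' j x by move=> j x; rewrite /b'; case: ifP.
have Hb' : forall j x, b' j x <= 1.
  by move=> j x; rewrite /b'; case: ifP => // _; exact: le_trans (Hab _ _) (Hb _ _).
pose F := fun x : 'I_q => Ev X U i n (xsx x) a b `\` Ev X U i n (xsx x) a b'.
have EF : Ev X U i.+1 n xs a b = \big[setU/set0]_(x < q) F x.
  apply/seteqP; split=> t.
    move=> H; apply/bigU_ord; exists (X i t); split.
      move=> j jn; have := H j jn; rewrite ltnS leq_eqVlt /xsx.
      have [->|ji] := eqVneq j i => /=; first by rewrite ltnn => /andP[_ ?].
      by [].
    move=> H2; have := H2 i Hin; rewrite ltnn /xsx /b' eqxx => -[_].
    by have := H i Hin; rewrite ltnS leqnn => /andP[h1 _]; rewrite leNgt h1.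
  move/bigU_ord => [x [H1 H2]] j jn.
  have hx : X i t = x by have := H1 i Hin; rewrite ltnn /xsx eqxx => -[].
  rewrite ltnS leq_eqVlt; have [->|ji] := eqVneq j i => /=.
    have := H1 i Hin; rewrite ltnn /xsx eqxx => -[_ hu]; rewrite hx hu andbT.
    rewrite ltNge; apply/negP => hu'; apply: H2 => k kn; have := H1 k kn; rewrite /xsx /b'.
    by case: eqVneq => [->|ki] //; rewrite ltnn => -[-> _]; split.
  by have := H1 j jn; rewrite /xsx (negbTE ji).
have mE := meas_Ev HU.
have Fm : forall x, measurable (F x).
  by move=> x; rewrite /F; apply: measurableD; exact: mE.
have PF : forall x, P (F x) = (evprod i n (xsx x) a b - evprod i n (xsx x) a b')%:E.
  move=> x; rewrite /F measureD; [|exact: mE|exact: mE|exact: (le_lt_trans (probability_le1 _ (mE _ _ _ _ _)) (ltry _))].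
  rewrite setIidr; last first.
    move=> t /= H j jn; have := H j jn; case: ifP => hj.
      by rewrite /b' (ltn_eqF hj).
    by case=> -> h; split=> //; apply: le_trans h _; rewrite /b'; case: ifP => // _; exact: Hab.
  by rewrite EFinB -(IH n (xsx x) a b) // -(IH n (xsx x) a b') //.
rewrite EF measure_semi_additive_ord //; last 2 first.
- move=> x y _ _ [t [[H1 _] [H2 _]]].
  move: (H1 i Hin) (H2 i Hin); rewrite ltnn /xsx eqxx => -[h1 _] [h2 _].
  by rewrite -h1 -h2.
- by apply: bigsetU_measurable => x _; exact: Fm.
rewrite (eq_bigr _ (fun x _ => PF x)) sumEFin; congr EFin.
pose i0 := Ordinal Hin.
pose G := \prod_(j < n | j != i0) (q%:R^-1 * (if (j < i.+1)%N then \sum_(x < q) (b j x - a j x) else b j (xs j))).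
have E : forall (c : nat -> 'I_q -> R) x, (forall j, j != i -> c j = b j) ->
    \prod_(j < n) (q%:R^-1 * (if (j < i)%N then \sum_(y < q) (c j y - a j y) else c j (xsx x j)))
    = q%:R^-1 * c i x * G.
  move=> c x Hc; rewrite (bigD1 i0) //= ltnn /xsx eqxx; congr (_ * _).
  apply: eq_bigr => j ji.
  have ji' : (j : nat) != i by apply: contra ji => /eqP h; apply/eqP/val_inj.
  have e : (j < i.+1)%N = (j < i)%N by rewrite ltnS leq_eqVlt (negbTE ji').
  by rewrite (negbTE ji') e Hc.
have E1 : forall x, evprod i n (xsx x) a b = q%:R^-1 * b i x * G.
  by move=> x; rewrite /evprod E.
have E2 : forall x, evprod i n (xsx x) a b' = q%:R^-1 * a i x * G.
  move=> x; rewrite /evprod E ?/b' ?eqxx // => j ji; by rewrite (negbTE ji).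
under eq_bigr => x _ do rewrite E1 E2.
rewrite /evprod (bigD1 i0) //= ltnSn -/G.
rewrite mulr_sumr big_distrl /=; apply: eq_bigr => x _; ring.
Qed.

Lemma mu_le_max (R : realType) m q (mu : 'I_m -> 'I_q -> R) i x : mu i x <= mumax mu x.
Proof. by rewrite /mumax (bigD1 i) //= le_max lexx. Qed.

Lemma min_le_mu (R : realType) m q (mu : 'I_m -> 'I_q -> R) i x : mumin mu x <= mu i x.
Proof. by rewrite /mumin (bigD1 i) //= ge_min lexx. Qed.

Lemma max_ge0 (R : realType) m q (mu : 'I_m -> 'I_q -> R) x : 0 <= mumax mu x.
Proof. by rewrite /mumax; elim/big_rec: _ => // i y _ hy; rewrite le_max hy orbT. Qed.

Lemma min_ge0 (R : realType) m q (mu : 'I_m -> 'I_q -> R) x :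
  (forall i, 0 <= mu i x) -> 0 <= mumin mu x.
Proof.
move=> H; rewrite /mumin; elim/big_ind: _ => //; first exact: max_ge0.
by move=> a b ha hb; rewrite le_min ha.
Qed.

Lemma max_le1 (R : realType) m q (mu : 'I_m -> 'I_q -> R) x :
  (forall i, mu i x <= 1) -> mumax mu x <= 1.
Proof.
by move=> H; rewrite /mumax; elim/big_ind: _ => // a b ha hb; rewrite ge_max ha.
Qed.

Lemma distr_le1 (R : realType) q (nu : 'I_q -> R) x : is_distr nu -> nu x <= 1.
Proof.
case=> H0 H1; rewrite -H1 (bigD1 x) //= lerDl; exact: sumr_ge0.
Qed.

Lemma MC_someP (R : realType) (T : Type) q (X : nat -> T -> 'I_q) (U : nat -> T -> R) nu t x :
  MinCoupler X U nu t = Some x <->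
  exists k, U k t <= nu (X k t) /\ (forall j, (j < k)%N -> ~ U j t <= nu (X j t)) /\ X k t = x.
Proof.
rewrite /MinCoupler; case: pselect => [h|h]; last first.
  by split=> // -[k [hk _]]; case: h; exists k.
case: ex_minnP => k Hk Hmin; split.
  by case=> <-; exists k; split=> //; split=> // j jk hj; move: (Hmin j hj); rewrite leqNgt jk.
case=> k' [h1 [h2 h3]]; congr Some; rewrite -h3.
have kk' := Hmin k' h1.
case: (ltngtP k k') kk' => // [kk|kk] _; last by rewrite kk.
by case: (h2 k kk).
Qed.

Lemma MC_noneP (R : realType) (T : Type) q (X : nat -> T -> 'I_q) (U : nat -> T -> R) nu t :
  MinCoupler X U nu t = None <-> forall k, ~ U k t <= nu (X k t).
Proof.
rewrite /MinCoupler; case: pselect => [h|h]; last first.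
  by split=> // _ k hk; apply: h; exists k.
by split=> // H; case: h => k hk; case: (H k hk).
Qed.

Lemma meas_Acc (R : realType) d (T : measurableType d) (P : probability T R) q X U
  (HU : uniform_seed P X U) (nu : 'I_q -> R) k :
  measurable [set t | U k t <= nu (X k t)].
Proof.
case: HU => HX [HUm _].
apply: (@meas_eq _ _ ([set t | exists y, ([set t | X k t = y] `&` [set t | U k t <= nu y]) t])).
  by move=> t /=; split; [case=> y [->]|move=> h; exists (X k t)].
by apply: meas_ex => y; apply: measurableI.
Qed.

Lemma meas_MC (R : realType) d (T : measurableType d) (P : probability T R) q X U
  (HU : uniform_seed P X U) (nu : 'I_q -> R) o :
  measurable [set t | MinCoupler X U nu t = o].
Proof.
have mA := meas_Acc HU nu.
case: o => [x|].
  apply: (@meas_eq _ _ (\bigcup_k ([set t | U k t <= nu (X k t)] `&`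
      [set t | forall j, (j < k)%N -> (~` [set t | U j t <= nu (X j t)]) t] `&` [set t | X k t = x]))).
    move=> t /=; split.
      by case=> k _ [[h1 h2] h3]; apply/MC_someP; exists k.
    by move/MC_someP => [k [h1 [h2 h3]]]; exists k.
  apply: bigcupT_measurable => k; apply: measurableI; last exact: HU.1.
  apply: measurableI => //; apply: meas_forall => j; exact: measurableC.
apply: (@meas_eq _ _ (~` \bigcup_k [set t | U k t <= nu (X k t)])).
  move=> t /=; split.
    by move=> h; apply/MC_noneP => k hk; apply: h; exists k.
  by move/MC_noneP => h [k _ hk]; exact: h k hk.
by apply: measurableC; apply: bigcupT_measurable.
Qed.

Unset Implicit Arguments.

Lemma prod_const_ord (R : realType) (r : R) n : \prod_(j < n) r = r ^+ n.
Proof. by elim: n => [|n IH]; rewrite ?big_ord0 ?expr0 // big_ord_recr IH exprSr. Qed.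

Lemma geo_id (R : realType) (r c : R) n :
  (\sum_(k < n) r ^+ k * c) * (1 - r) = (1 - r ^+ n) * c.
Proof.
elim: n => [|n IH]; first by rewrite big_ord0 expr0 subrr !mul0r.
by rewrite big_ord_recr /= mulrDl IH exprS; ring.
Qed.

Theorem lemma2p9 (R : realType) (d : measure_display) (T : measurableType d)
  (P : probability T R) (m q : nat) (X : nat -> T -> 'I_q) (U : nat -> T -> R)
  (mu : 'I_m -> 'I_q -> R) :
  (0 < m)%N -> (0 < q)%N ->
  uniform_seed P X U ->
  (forall i, is_distr (mu i)) ->
  (P [set t | exists i j : 'I_m,
        MinCoupler X U (mu i) t <> MinCoupler X U (mu j) t]
   <= ((\sum_(x < q) (mumax mu x - mumin mu x)) /
       (\sum_(x < q) mumax mu x))%:E)%E.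
Proof.
move=> m0 q0 HU Hmu.
set Bs := (X in (_ X <= _)%E).
set M := mumax mu. set mn := mumin mu.
have HM1 : forall i x, mu i x <= M x := fun i x => mu_le_max mu i x.
have Hmn : forall i x, mn x <= mu i x := fun i x => min_le_mu mu i x.
have Hmu0 : forall i x, 0 <= mu i x := fun i x => (Hmu i).1 x.
have Hmn0 : forall x, 0 <= mn x := fun x => min_ge0 (fun i => Hmu0 i x).
have HM0 : forall x, 0 <= M x := fun x => max_ge0 mu x.
have HM1' : forall x, M x <= 1 := fun x => max_le1 (fun i => distr_le1 x (Hmu i)).
pose i0 : 'I_m := Ordinal m0.
have HmnM : forall x, mn x <= M x := fun x => le_trans (Hmn i0 x) (HM1 i0 x).
pose x0 : 'I_q := Ordinal q0. pose xs0 := fun _ : nat => x0.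
have mB : measurable Bs.
  apply: (@meas_eq _ _ ([set t | exists i : 'I_m, [set t | exists j : 'I_m,
     [set t | exists o : option 'I_q, ([set t | MinCoupler X U (mu i) t = o] `&`
        ~` [set t | MinCoupler X U (mu j) t = o]) t] t] t])).
    move=> t /=; split.
      by case=> i [j [ob [h1 h2]]]; exists i, j; move=> h; apply: h2; rewrite -h.
    by case=> i [j h]; exists i, j, (MinCoupler X U (mu i) t); split=> // e; apply: h; rewrite e.
  apply: meas_ex => i; apply: meas_ex => j; apply: meas_ex => o.
  by apply: measurableI; [exact: meas_MC HU _ _|apply: measurableC; exact: meas_MC HU _ _].
pose r := q%:R^-1 * \sum_(x < q) (1 - M x).
pose c := q%:R^-1 * \sum_(x < q) (M x - mn x).
have mE := meas_Ev HU.
have Hbound : forall n, (P Bs <= (r ^+ n + \sum_(k < n) r ^+ k * c)%:E)%E.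
  move=> n.
  pose W := Ev X U n n xs0 (fun _ _ => 0) (fun _ _ => 1).
  pose N := Ev X U n n xs0 (fun _ => M) (fun _ _ => 1).
  pose G := fun k : nat => Ev X U k.+1 k.+1 xs0 (fun j => if (j < k)%N then M else mn)
                 (fun j => if (j < k)%N then (fun _ => 1) else M).
  pose H := fun k : nat => match k with 0 => ~` W | 1 => N | k'.+2 => G k' end.
  have mH : forall k, measurable (H k).
    by case=> [|[|k]] /=; [apply: measurableC|..]; exact: mE.
  have PW : P W = 1%:E.
    rewrite (Ev_prob HU) //; congr EFin; rewrite /evprod big1 // => j _.
    rewrite ltn_ord; under eq_bigr => x _ do rewrite subr0.
    by rewrite sumr_const card_ord mulVf // pnatr_eq0 -lt0n.
  have PN : P N = (r ^+ n)%:E.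
    rewrite (Ev_prob HU) //; congr EFin; rewrite /evprod.
    under eq_bigr => j _ do rewrite ltn_ord.
    by rewrite prod_const_ord.
  have PG : forall k, P (G k) = (r ^+ k * c)%:E.
    move=> k; rewrite (Ev_prob HU); last 3 first.
    - by move=> j x; case: ifP.
    - by move=> j x; case: ifP.
    - by move=> j x; case: ifP.
    congr EFin; rewrite /evprod big_ord_recr /= ltnSn ltnn.
    congr (_ * _).
    rewrite -prod_const_ord; apply: eq_bigr => j _.
    by rewrite ltnS (ltnW (ltn_ord j)) ltn_ord.
  have PC : P (~` W) = 0%E.
    by rewrite probability_setC ?PW ?subee //; exact: mE.
  have cover : Bs `<=` \big[setU/set0]_(k < n.+2) H k.
    move=> t Bt; apply/bigU_ord.
    case: (pselect (W t)) => Wt; last by exists ord0.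
    have hW : forall j, (j < n)%N -> 0 < U j t <= 1.
      by move=> j jn; have := Wt j jn; rewrite jn.
    case: (pselect (exists j, (j < n)%N && (U j t <= M (X j t)))) => [hex|hno].
      case: (ex_minnP hex) => k /andP[kn hk] hmin.
      exists (Ordinal (kn : (k.+2 < n.+2)%N)) => /= j jk; rewrite jk.
      case: ifP => jk'.
        have jn : (j < n)%N := ltn_trans jk' kn.
        apply/andP; split; last by case/andP: (hW j jn).
        rewrite ltNge; apply/negP => hj.
        by have := hmin j; rewrite jn hj => /(_ isT); rewrite leqNgt jk'.
      have -> : j = k by apply/eqP; rewrite eqn_leq -ltnS jk leqNgt jk'.
      rewrite hk andbT ltNge; apply/negP => hle.
      have all : forall i, MinCoupler X U (mu i) t = Some (X k t).
        move=> i; apply/MC_someP; exists k; split; first exact: le_trans hle (Hmn i _).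
        split=> // j2 jk2 hj.
        have := hmin j2; rewrite (ltn_trans jk2 kn) (le_trans hj (HM1 i _)) => /(_ isT).
        by rewrite leqNgt jk2.
      by case: Bt => i [j0]; rewrite !all.
    exists (@Ordinal n.+2 1 isT) => /= j jn; rewrite jn.
    have /andP[h0 h1] := hW j jn.
    apply/andP; split=> //; rewrite ltNge; apply/negP => hj; apply: hno.
    by exists j; rewrite jn hj.
  have h0 := content_subadditive P (fun k _ => mH k) mB cover.
  have h : (P Bs <= \sum_(k < n.+2) P (H k))%E := h0.
  apply: (le_trans h); rewrite !big_ord_recl /= PC PN add0e.
  under eq_bigr => k _ do rewrite PG.
  by rewrite sumEFin -EFinD.
pose D := \sum_(x < q) (M x - mn x). pose S := \sum_(x < q) M x.
rewrite -/D -/S.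
have qn0 : q%:R != 0 :> R by rewrite pnatr_eq0 -lt0n.
have S1 : 1 <= S.
  by rewrite -(Hmu i0).2; apply: ler_sum => x _; exact: HM1.
have S0 : 0 < S := lt_le_trans ltr01 S1.
have e1 : 1 - r = q%:R^-1 * S.
  by rewrite /r sumrB sumr_const card_ord mulrBr mulVf //; rewrite /S; ring.
have c0 : 0 <= c.
  rewrite /c mulr_ge0 // ?invr_ge0 ?ler0n //.
  by apply: sumr_ge0 => x _; rewrite subr_ge0.
have r0 : 0 <= r.
  rewrite /r mulr_ge0 // ?invr_ge0 ?ler0n //.
  by apply: sumr_ge0 => x _; rewrite subr_ge0.
have r1 : 0 < 1 - r by rewrite e1 mulr_gt0 // invr_gt0 ltr0n.
have cD : D / S * (1 - r) = c.
  rewrite e1 /c /D; field; apply/andP; split=> //; exact: lt0r_neq0.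
have geo : forall n, \sum_(k < n) r ^+ k * c <= D / S.
  move=> n; rewrite -(ler_pM2r r1) geo_id cD mulrBl mul1r.
  have := mulr_ge0 (exprn_ge0 n r0) c0; lra.
have fin : P Bs \is a fin_num.
  by rewrite ge0_fin_numE ?measure_ge0 // (le_lt_trans (probability_le1 _ mB)) ?ltry.
rewrite -(fineK fin) lee_fin.
apply/ler_addgt0Pr => e e0.
have [N _ HN] : \forall n \near \oo, `|r ^+ n| < e.
  apply: cvgr0_norm_lt e0; apply: cvg_expr; rewrite ger0_norm //; lra.
have := Hbound N; rewrite -(fineK fin) lee_fin => hb.
have hN : `|r ^+ N| < e := HN N (leqnn N).
apply: (le_trans hb); rewrite addrC; apply: lerD; first exact: geo.
exact: le_trans (ler_norm _) (ltW hN).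
Qed.
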